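(* For a facility location problem with $n$ agents, the Leftmost mechanism $n$-approximates the complemented Gini index of utilities.
   Context: One facility is located on $[0,1]$; $n$ agents have locations $x_1\le\dots\le x_n$ in $[0,1]$. For a facility at $y$, agent $i$ has distance $d_i=|x_i-y|$ and utility $u_i=1-d_i$. The Gini index of utilities is $G_u=\frac{\sum_i\sum_j|u_i-u_j|}{2n\sum_i u_i}$ and the complemented Gini index is $1-G_u$. The Leftmost mechanism locates the facility at $x_1$. For a mechanism $M$ and a maximization objective $O$, the approximation ratio (over profiles with $n$ agents) is the supremum over all profiles $x\in[0,1]^n$ of $\mathrm{OPT}(x)/O(M(x))$, where $\mathrm{OPT}(x)=\max_{y\in[0,1]}O(y)$; $M$ ''$\alpha$-approximates'' $O$ if this approximation ratio equals $\alpha$. *)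

(* Defs.v *)
From HB Require Import structures.
From mathcomp Require Import all_boot all_order all_algebra.
From mathcomp Require Import all_classical all_reals.
Set Implicit Arguments. Unset Strict Implicit. Unset Printing Implicit Defensive.
Import Order.TTheory GRing.Theory Num.Theory.
Local Open Scope ring_scope.
Local Open Scope classical_set_scope.

Section FacilityGini.
Variables (R : realType) (n : nat).

Definition profile := 'I_n -> R.

Definition is_profile (x : profile) : Prop := forall i, 0 <= x i <= 1.

Definition util (x : profile) (y : R) (i : 'I_n) : R := 1 - `|x i - y|.

Definition gini_u (x : profile) (y : R) : R :=
  (\sum_(i < n) \sum_(j < n) `|util x y i - util x y j|)
  / (2 * n%:R * \sum_(i < n) util x y i).

Definition cgini (x : profile) (y : R) : R := 1 - gini_u x y.

Definition OPT (x : profile) : R := sup [set cgini x y | y in `[0, 1]%classic].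

Definition leftmost (x : profile) : R := \big[Order.min/1]_(i < n) x i.

Definition leftmost_cgini_ratio : R :=
  sup [set OPT x / cgini x (leftmost x) | x in is_profile].

End FacilityGini.

(* Main.v *)
Require Import Defs.
From mathcomp Require Import all_boot all_order all_algebra.
From mathcomp Require Import all_classical all_reals.
From mathcomp Require Import ring lra.
Import Order.TTheory GRing.Theory Num.Theory.
Local Open Scope ring_scope.
Local Open Scope classical_set_scope.

Section Aux.
Variables (R : realType) (n : nat).

Lemma util_ge0 (x : profile R n) y i : is_profile x -> 0 <= y <= 1 ->
  0 <= util x y i.
Proof.
move=> hx /andP[y0 y1]; rewrite /util subr_ge0 ler_norml.
by case/andP: (hx i) => a b; apply/andP; split; lra.
Qed.

Lemma gini_sum (u : 'I_n -> R) : (forall i, 0 <= u i) ->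
  \sum_(i < n) \sum_(j < n) `|u i - u j| <= 2 * (n%:R - 1) * \sum_(i < n) u i.
Proof.
move=> u0.
have step : forall i, \sum_(j < n) `|u i - u j| <=
    \sum_(j < n) (u i + u j) - 2 * u i.
  move=> i; rewrite (bigD1 i) //= [X in _ <= X - _](bigD1 i) //= subrr normr0 add0r.
  have : \sum_(j < n | j != i) `|u i - u j| <= \sum_(j < n | j != i) (u i + u j).
    apply: ler_sum => j _; rewrite ler_norml; move: (u0 i) (u0 j) => a b.
    by apply/andP; split; lra.
  lra.
apply: le_trans (ler_sum _ (fun i _ => step i)) _.
set S := \sum_(i < n) u i.
have h : forall i, \sum_(j < n) (u i + u j) - 2 * u i = (n%:R - 2) * u i + S.
  by move=> i; rewrite big_split /= sumr_const card_ord -/S -[u i *+ n]mulr_natl; ring.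
under eq_bigr do rewrite h.
rewrite big_split /= sumr_const card_ord -big_distrr /= -/S -[S *+ n]mulr_natl.
by rewrite le_eqVlt; apply/orP; left; apply/eqP; ring.
Qed.


Lemma cgini_le1 (x : profile R n) y : is_profile x -> 0 <= y <= 1 -> cgini x y <= 1.
Proof.
move=> hx hy; rewrite /cgini /gini_u lerBlDr lerDl; apply: divr_ge0.
  by apply: sumr_ge0 => i _; apply: sumr_ge0 => j _.
apply: mulr_ge0; first by apply: mulr_ge0.
by apply: sumr_ge0 => i _; apply: util_ge0.
Qed.

Lemma OPT_le1 (x : profile R n) : is_profile x -> OPT x <= 1.
Proof.
move=> hx; apply: ge_sup.
  by exists (cgini x 0), 0 => //=; rewrite in_itv /= lexx ler01.
move=> _ [y hy <-]; apply: cgini_le1 => //; by move: hy; rewrite /= in_itv.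
Qed.

Lemma cgini_lb (x : profile R n) y : (0 < n)%N -> is_profile x -> 0 <= y <= 1 ->
  (exists i, util x y i = 1) -> 1 <= n%:R * cgini x y.
Proof.
move=> n0 hx hy [i0 hi0].
set S := \sum_(i < n) util x y i.
have S1 : 1 <= S.
  rewrite /S (bigD1 i0) //= hi0 lerDl; apply: sumr_ge0 => i _; exact: util_ge0.
have hA := @gini_sum (util x y) (fun i => @util_ge0 x y i hx hy).
rewrite -/S in hA.
set A := \sum_(i < n) \sum_(j < n) _ in hA.
have nR : 1 <= n%:R :> R by rewrite ler1n.
rewrite /cgini /gini_u -/S -/A.
have -> : n%:R * (1 - A / (2 * n%:R * S)) = n%:R - A / (2 * S).
  field; apply/andP; split; apply/negP => /eqP; lra.
have : A / (2 * S) <= n%:R - 1.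
  rewrite ler_pdivrMr; last lra.
  lra.
lra.
Qed.

End Aux.

Theorem theorem2 (R : realType) (n : nat) (hn : (0 < n)%N) :
  leftmost_cgini_ratio R n = n%:R.
Proof.
have nR : 1 <= n%:R :> R by rewrite ler1n.
pose x0 : profile R n := fun i => if nat_of_ord i == 0%N then 0 else 1.
have hx0 : is_profile x0 by move=> i; rewrite /x0; case: ifP => _; rewrite ?lexx ?ler01.
have ub : ubound [set OPT x / cgini x (leftmost x) | x in @is_profile R n] n%:R.
  move=> _ [x hx <-].
  have hm : 0 <= leftmost x <= 1.
    rewrite /leftmost; apply/andP; split.
      apply: le_bigmin => // i _; by case/andP: (hx i).
    exact: bigmin_le_id.
  have [i0 _ hi0] := @eq_bigmin _ _ _ (1 : R) (Ordinal hn) predT x isT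
     (fun i _ => proj2 (andP (hx i))).
  have hl := @cgini_lb R n x _ hn hx hm.
  have hc : 1 <= n%:R * cgini x (leftmost x).
    apply: hl; exists i0; rewrite /util /leftmost hi0 subrr normr0 subr0 //.
  have c0 : 0 < cgini x (leftmost x).
    have : 0 < n%:R * cgini x (leftmost x) by lra.
    by rewrite pmulr_rgt0 // ltr0n.
  rewrite ler_pdivrMr //; have := @OPT_le1 R n x hx; lra.
have hu : forall i, util x0 0 i = if nat_of_ord i == 0%N then 1 else 0.
  by move=> i; rewrite /util /x0; case: ifP => _; rewrite subr0 ?normr0 ?normr1 ?subr0 ?subrr.
have hl0 : leftmost x0 = 0.
  apply/le_anti/andP; split.
    have := bigmin_le (1 : R) (Ordinal hn) x0; rewrite /x0 /=; exact.
  by apply: le_bigmin => // i _; case/andP: (hx0 i).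
have hc : n%:R * cgini x0 (leftmost x0) = 1.
  rewrite hl0 /cgini /gini_u.
  under eq_bigr do under eq_bigr do rewrite !hu.
  under [X in _ * (_ - _ / (_ * X))]eq_bigr do rewrite hu.
  case: n hn nR {x0 hx0 hu hl0 ub} => [//|m] _ nR.
  have hS : \sum_(i < m.+1) (if nat_of_ord i == 0%N then 1 else 0 : R) = 1.
    by rewrite big_ord_recl /= big1 ?addr0.
  have hA : \sum_(i < m.+1) \sum_(j < m.+1) `|(if nat_of_ord i == 0%N then 1 else 0 : R)
     - (if nat_of_ord j == 0%N then 1 else 0)| = 2 * m%:R.
    rewrite big_ord_recl /= big_ord_recl /= subrr normr0 add0r.
    have hi : forall i : 'I_m, \sum_(j < m.+1) `|0 - (if nat_of_ord j == 0%N then 1 else 0 : R)| = 1.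
      move=> i; rewrite big_ord_recl /= big1 ?sub0r ?normrN ?normr1 ?addr0 // => j _.
      by rewrite normr0.
    rewrite (eq_bigr _ (fun i _ => hi i)) subr0 normr1 !sumr_const card_ord -mulr2n.
    by rewrite mulr_natl.
  rewrite hS hA; field.
  by rewrite addrC natr1 pnatr_eq0.
have hO : 1 <= OPT x0.
  have h12 : 0 <= (2^-1 : R) <= 1 by apply/andP; split; lra.
  have hu2 : forall i, util x0 2^-1 i = 2^-1.
    move=> i; rewrite /util /x0; case: ifP => _.
      by rewrite sub0r normrN ger0_norm; lra.
    by rewrite ger0_norm; lra.
  have -> : 1 = cgini x0 2^-1.
    rewrite /cgini /gini_u big1 ?mul0r ?subr0 // => i _.
    by rewrite big1 // => j _; rewrite !hu2 subrr normr0.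
  apply: sup_upper_bound; last by exists 2^-1 => //=; rewrite in_itv.
  split; first by exists (cgini x0 2^-1), 2^-1 => //=; rewrite in_itv.
  exists 1; move=> _ [y hy <-].
  by apply: (@cgini_le1 R n x0 y hx0); move: hy; rewrite /= in_itv.
apply/le_anti/andP; split.
  apply: ge_sup => //; by exists (OPT x0 / cgini x0 (leftmost x0)), x0.
have c0 : 0 < cgini x0 (leftmost x0).
  have : 0 < n%:R * cgini x0 (leftmost x0) by lra.
  by rewrite pmulr_rgt0 // ltr0n.
apply: (@le_trans _ _ (OPT x0 / cgini x0 (leftmost x0))).
  rewrite ler_pdivlMr //; lra.
apply: sup_upper_bound; last by exists x0.
by split; [exists (OPT x0 / cgini x0 (leftmost x0)), x0 | exists n%:R].
Qed.
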